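(* Let $X_1$ be a positive random variable distributed as $X$, where $\mathbb{E}X=1$, and let $p\ge2$ be an integer. If $\mathbb{P}\{X\ge x\}=o(x^{-p-1})$ as $x\to\infty$, then $$\mathbb{E}\frac{X_1^{2p}}{\left(\frac1nX_1+1\right)^p}=o(n^{p-1})\quad(n\to\infty).$$ In addition, if $\mathbb{P}\{X\ge x\}=O(x^{-q})$ as $x\to\infty$ for some real $q$ with $p<q<2p$, then $$\mathbb{E}\frac{X_1^{2p}}{\left(\frac1nX_1+1\right)^p}=O(n^{2p-q}).$$ *)

(* Defs.v *)
From HB Require Import structures.
From mathcomp Require Import all_boot all_order all_algebra.
From mathcomp Require Import all_classical all_reals all_analysis.
Set Implicit Arguments. Unset Strict Implicit. Unset Printing Implicit Defensive.
Import Order.TTheory GRing.Theory Num.Theory.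
Local Open Scope classical_set_scope.
Local Open Scope ring_scope.

Definition tail_prob d (T : measurableType d) (R : realType)
  (P : probability T R) (X : {RV P >-> R}) (x : R) : R :=
  fine (P [set t | x <= X t]).

Definition lem5_integrand d (T : measurableType d) (R : realType)
  (P : probability T R) (X : {RV P >-> R}) (p n : nat) (t : T) : R :=
  X t ^+ (2 * p) / (X t / n%:R + 1) ^+ p.

Definition lem5_expect d (T : measurableType d) (R : realType)
  (P : probability T R) (X : {RV P >-> R}) (p n : nat) : \bar R :=
  (\int[P]_t (lem5_integrand X p n t)%:E)%E.

(* the filter x --> +oo on R, packaged as a filter_on for Landau notation *)
Definition pinfty_filter (R : realType) : filter_on R :=
  FilterType (pinfty_nbhs R) (@proper_pinfty_nbhs R : Filter (pinfty_nbhs R)).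

(* Main.v *)
Require Import Defs.
From HB Require Import structures.
From mathcomp Require Import all_boot all_order all_algebra.
From mathcomp Require Import all_classical all_reals all_analysis.
From mathcomp Require Import ring lra zify measurable_realfun.
Import Order.TTheory GRing.Theory Num.Theory.
Local Open Scope classical_set_scope.
Local Open Scope ring_scope.
Section real_part.
Context {R : realType}.

Definition hh (p n : nat) (y : R) : R := y ^+ (2 * p) / (y / n%:R + 1) ^+ p.

Lemma hhE p n (y : R) : hh p n y = (y ^+ 2 / (y / n%:R + 1)) ^+ p.
Proof. by rewrite /hh exprM expr_div_n. Qed.

Lemma den_gt0 n (y : R) : 0 <= y -> 0 < y / n%:R + 1.
Proof. move=> y0; have : 0 <= y / n%:R by rewrite divr_ge0. lra. Qed.

Lemma hh_ge0 p n (y : R) : 0 <= y -> 0 <= hh p n y.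
Proof. by move=> y0; rewrite hhE exprn_ge0 // divr_ge0 ?sqr_ge0 ?ltW ?den_gt0. Qed.

Lemma hh_mono p n (y z : R) : 0 <= y -> y <= z -> hh p n y <= hh p n z.
Proof.
move=> y0 yz; rewrite !hhE; apply: lerXn2r.
- by rewrite nnegrE divr_ge0 ?sqr_ge0 ?ltW ?den_gt0.
- by rewrite nnegrE divr_ge0 ?sqr_ge0 ?ltW ?den_gt0 ?(le_trans y0).
have z0 : 0 <= z by apply: le_trans yz.
rewrite ler_pdivrMr ?den_gt0 // mulrAC ler_pdivlMr ?den_gt0 //.
have w0 : 0 <= n%:R^-1 :> R by rewrite invr_ge0.
have h1 : 0 <= y * z * n%:R^-1 by rewrite !mulr_ge0.
have h2 : y ^+ 2 * (z / n%:R) <= z ^+ 2 * (y / n%:R).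
  have -> : y ^+ 2 * (z / n%:R) = y * (y * z * n%:R^-1) by ring.
  have -> : z ^+ 2 * (y / n%:R) = z * (y * z * n%:R^-1) by ring.
  by rewrite ler_wpM2r.
have h3 : y ^+ 2 <= z ^+ 2 by rewrite lerXn2r // nnegrE.
rewrite !mulrDr !mulr1; lra.
Qed.

Lemma hh_le_pow p n (y : R) : 0 <= y -> hh p n y <= y ^+ (2 * p).
Proof.
move=> y0; rewrite hhE exprM; apply: lerXn2r.
- by rewrite nnegrE divr_ge0 ?sqr_ge0 ?ltW ?den_gt0.
- by rewrite nnegrE sqr_ge0.
rewrite ler_pdivrMr ?den_gt0 //.
have : 0 <= y ^+ 2 * (y / n%:R) by rewrite mulr_ge0 ?sqr_ge0 ?divr_ge0.
rewrite mulrDr mulr1; lra.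
Qed.

Lemma hh_le_np p n (y : R) : (0 < n)%N -> 0 <= y -> hh p n y <= n%:R ^+ p * y ^+ p.
Proof.
move=> n0 y0; rewrite hhE -exprMn; apply: lerXn2r.
- by rewrite nnegrE divr_ge0 ?sqr_ge0 ?ltW ?den_gt0.
- by rewrite nnegrE mulr_ge0.
rewrite ler_pdivrMr ?den_gt0 // mulrDr mulr1.
have nn : n%:R != 0 :> R by rewrite pnatr_eq0 -lt0n.
have -> : n%:R * y * (y / n%:R) = y ^+ 2 by field.
have : 0 <= n%:R * y :> R by rewrite mulr_ge0.
lra.
Qed.

Lemma powR2k (k : nat) (e : R) : (2 ^+ k) `^ e = (2 `^ e) ^+ k.
Proof.
by rewrite -powR_mulrn // -powRrM mulrC powRrM powR_mulrn // powR_ge0.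
Qed.

Lemma powR_addn (y : R) (j : nat) (e : R) : 0 < y -> y ^+ j * y `^ e = y `^ (j%:R + e).
Proof.
move=> y0; rewrite powRD ?powR_mulrn ?ltW //.
by apply/implyP => _; rewrite gt_eqF.
Qed.

Lemma pow2_gt1 (e : R) : 0 < e -> 1 < 2 `^ e.
Proof.
move=> e0; rewrite /powR ifF ?pnatr_eq0 //.
rewrite expR_gt1 mulr_gt0 // ln_gt0 //; lra.
Qed.
Lemma pow2_lt1 (e : R) : e < 0 -> 2 `^ e < 1.
Proof.
move=> e0; rewrite /powR ifF ?pnatr_eq0 //.
rewrite expR_lt1 nmulr_rlt0 // ln_gt0 //; lra.
Qed.
Lemma geo_up (r : R) N : 1 < r -> \sum_(k < N) r ^+ k <= r ^+ N / (r - 1).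
Proof.
move=> r1; have r10 : 0 < r - 1 by lra.
elim: N => [|N IH]; first by rewrite big_ord0 expr0 divr_ge0 //; lra.
rewrite big_ord_recr /=.
have -> : r ^+ N.+1 / (r - 1) = r ^+ N / (r - 1) + r ^+ N.
  rewrite exprS; field; lra.
by rewrite lerD2r.
Qed.
Lemma geo_down (s : R) M N : 0 <= s < 1 -> \sum_(M <= k < N) s ^+ k <= s ^+ M / (1 - s).
Proof.
move=> /andP[s0 s1]; have s10 : 0 < 1 - s by lra.
case: (leqP N M) => NM; first by rewrite big_geq // divr_ge0 ?exprn_ge0 //; lra.
have key : forall L, \sum_(M <= k < M + L) s ^+ k <= (s ^+ M - s ^+ (M + L)) / (1 - s).
  elim=> [|L IH]; first by rewrite addn0 big_geq // subrr mul0r.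
  rewrite addnS big_nat_recr /= ?leq_addr //.
  have -> : (s ^+ M - s ^+ (M + L).+1) / (1 - s) = (s ^+ M - s ^+ (M + L)) / (1 - s) + s ^+ (M + L).
    rewrite exprS; field; lra.
  by rewrite lerD2r.
rewrite -(subnKC (ltnW NM)); apply: le_trans (key _) _.
rewrite ler_pM2r ?invr_gt0 // gerBl exprn_ge0 //.
Qed.
Definition Dc (p : nat) (a : R) : R :=
  2 ^+ (2 * p) * (2 `^ ((2 * p)%:R - a)) / (2 `^ ((2 * p)%:R - a) - 1)
  + 2 ^+ p / (1 - 2 `^ (p%:R - a)).

Lemma sumv_bound p n (a : R) N : (0 < n)%N -> p%:R < a -> a < (2 * p)%:R ->
  \sum_(k < N) hh p n (2 ^+ k.+1) * (2 ^+ k) `^ (- a) <= Dc p a * n%:R `^ ((2 * p)%:R - a).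
Proof.
move=> n0 pa a2p.
set r := 2 `^ ((2 * p)%:R - a); set s := 2 `^ (p%:R - a).
have r1 : 1 < r by apply: pow2_gt1; lra.
have s1 : s < 1 by apply: pow2_lt1; lra.
have s0 : 0 <= s by apply: powR_ge0.
have two0 : 0 < 2 :> R by [].
have vA : forall k, hh p n (2 ^+ k.+1) * (2 ^+ k) `^ (- a) <= 2 ^+ (2 * p) * r ^+ k.
  move=> k.
  have H1 : hh p n (2 ^+ k.+1) <= (2 ^+ k.+1) ^+ (2 * p) by apply: hh_le_pow; rewrite exprn_ge0.
  apply: le_trans (ler_wpM2r (powR_ge0 _ _) H1) _.
  by rewrite exprS exprMn -mulrA powR_addn ?exprn_gt0 // -powR2k /r.
have vB : forall k, hh p n (2 ^+ k.+1) * (2 ^+ k) `^ (- a) <= n%:R ^+ p * 2 ^+ p * s ^+ k.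
  move=> k.
  have H1 : hh p n (2 ^+ k.+1) <= n%:R ^+ p * (2 ^+ k.+1) ^+ p by apply: hh_le_np; rewrite ?exprn_ge0.
  apply: le_trans (ler_wpM2r (powR_ge0 _ _) H1) _.
  by rewrite exprS exprMn -!mulrA powR_addn ?exprn_gt0 // -powR2k /s.
have vge0 : forall k, 0 <= hh p n (2 ^+ k.+1) * (2 ^+ k) `^ (- a).
  by move=> k; rewrite mulr_ge0 ?powR_ge0 ?hh_ge0 ?exprn_ge0.
set m := trunc_log 2 n.
have hm1 : (2 ^ m <= n)%N by apply: trunc_logP.
have hm2 : (n < 2 ^ m.+1)%N by apply: trunc_log_ltn.
have hm1R : 2 ^+ m <= n%:R :> R by rewrite -natrX ler_nat.
have hm2R : n%:R <= 2 ^+ m.+1 :> R by rewrite -natrX ler_nat ltnW.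
have Sr : forall M, (M <= m.+1)%N -> \sum_(k < M) hh p n (2 ^+ k.+1) * (2 ^+ k) `^ (- a) <= 2 ^+ (2 * p) * (r ^+ m.+1 / (r - 1)).
  move=> M HM.
  apply: (@le_trans _ _ (\sum_(k < M) 2 ^+ (2 * p) * r ^+ k)); first by apply: ler_sum => k _; exact: vA.
  rewrite -mulr_sumr ler_pM2l ?exprn_gt0 //.
  apply: le_trans (geo_up r M r1) _.
  rewrite ler_wpM2r ?invr_ge0 ?ler_eXn2l //; lra.
have B2 : 0 <= n%:R ^+ p * 2 ^+ p * (s ^+ m.+1 / (1 - s)).
  by rewrite !mulr_ge0 ?exprn_ge0 ?invr_ge0 //; lra.
have Sall : \sum_(k < N) hh p n (2 ^+ k.+1) * (2 ^+ k) `^ (- a) <=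
   2 ^+ (2 * p) * (r ^+ m.+1 / (r - 1)) + n%:R ^+ p * 2 ^+ p * (s ^+ m.+1 / (1 - s)).
  case: (leqP N m.+1) => HN.
    by apply: le_trans (Sr _ HN) _; rewrite lerDl.
  rewrite -(big_mkord xpredT (fun k => hh p n (2 ^+ k.+1) * (2 ^+ k) `^ (- a))).
  rewrite (@big_cat_nat _ _ _ m.+1) //=; last exact: ltnW.
  apply: lerD; first by rewrite big_mkord; apply: Sr.
  apply: (@le_trans _ _ (\sum_(m.+1 <= k < N) n%:R ^+ p * 2 ^+ p * s ^+ k)); first by apply: ler_sum => k _; exact: vB.
  rewrite -mulr_sumr ler_pM2l ?mulr_gt0 ?exprn_gt0 ?ltr0n //.
  by apply: geo_down; rewrite s0 s1.
apply: le_trans Sall _.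
set X := n%:R `^ ((2 * p)%:R - a).
have nR0 : 0 < n%:R :> R by rewrite ltr0n.
have r0 : 0 < r by apply: lt_trans r1; exact: ltr01.
have e1 : r ^+ m.+1 <= r * X.
  rewrite exprS ler_pM2l // /r -powR2k; apply: ge0_ler_powR; rewrite ?nnegrE ?exprn_ge0 ?ler0n //; lra.
have e2 : n%:R ^+ p * s ^+ m.+1 <= X.
  rewrite /s -powR2k.
  have -> : X = n%:R ^+ p * n%:R `^ (p%:R - a).
    rewrite powR_addn // /X; congr (_ `^ _); rewrite natrM; lra.
  rewrite ler_pM2l ?exprn_gt0 //.
  rewrite -(opprB a) !powRN lef_pV2 ?posrE ?powR_gt0 ?exprn_gt0 //.
  apply: ge0_ler_powR; rewrite ?nnegrE ?exprn_ge0 ?ler0n //; lra.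
rewrite /Dc -/r -/s mulrDl; apply: lerD.
  have -> : 2 ^+ (2 * p) * r / (r - 1) * X = 2 ^+ (2 * p) * (r * X / (r - 1)) by rewrite /=; ring.
  rewrite ler_pM2l ?exprn_gt0 // ler_pM2r ?invr_gt0 //; lra.
have -> : n%:R ^+ p * 2 ^+ p * (s ^+ m.+1 / (1 - s)) = 2 ^+ p / (1 - s) * (n%:R ^+ p * s ^+ m.+1) by ring.
rewrite ler_pM2l // divr_gt0 ?exprn_gt0 //; lra.
Qed.
End real_part.
Lemma ptwise_real {R : realType} (p n : nat) N (y : R) : 0 <= y -> y < 2 ^+ N ->
  hh p n y <= 1 + \sum_(k < N) hh p n (2 ^+ k.+1) * (2 ^+ k <= y)%R%:R.
Proof.
move=> y0; elim: N => [|N IH] yN.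
  rewrite big_ord0 addr0; apply: le_trans (hh_le_pow p n y y0) _.
  by rewrite exprn_ile1 // ltW.
rewrite big_ord_recr /= addrA.
have sum0 : 0 <= 1 + \sum_(k < N) hh p n (2 ^+ k.+1) * (2 ^+ k <= y)%R%:R :> R.
  by apply: addr_ge0 => //; apply: sumr_ge0 => k _; rewrite mulr_ge0 ?hh_ge0 ?exprn_ge0.
case: (ltP y (2 ^+ N)) => hN.
  by apply: le_trans (IH hN) _; rewrite lerDl mulr_ge0 ?hh_ge0 ?exprn_ge0.
rewrite ?hN mulr1; apply: le_trans (hh_mono p n y _ y0 (ltW yN)) _.
by rewrite lerDr.
Qed.

Lemma le_int_nm d (T : measurableType d) (R : realType) (mu : {measure set T -> \bar R}) (f g : T -> \bar R) :
  (forall x, (0 <= f x)%E) -> (forall x, (f x <= g x)%E) -> (\int[mu]_x f x <= \int[mu]_x g x)%E.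
Proof.
move=> f0 fg.
have g0 : forall x, (0 <= g x)%E by move=> x; exact: le_trans (fg x).
rewrite !ge0_integralTE//.
apply: le_ereal_sup => _ [h /= hf <-]; exists h => //= x; exact: le_trans (fg x).
Qed.

Section meas.
Context {d} {T : measurableType d} {R : realType} {P : probability T R} {X : {RV P >-> R}}.
Hypothesis Xpos : forall t, 0 < X t.

Definition AA (k : nat) := [set t | (2 : R) ^+ k <= X t].

Lemma mAA k : measurable (AA k).
Proof.
have -> : AA k = X @^-1` `[(2 : R) ^+ k, +oo[.
  by apply/seteqP; split => t; rewrite /AA /= in_itv /= andbT.
exact: measurable_funPTI.
Qed.

Lemma indAA k t : \1_(AA k) t = (2 ^+ k <= X t)%R%:R :> R.
Proof. rewrite indicE /AA; case: (boolP (_ <= _)) => h. by rewrite mem_set. by rewrite memNset //=; apply/negP. Qed.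

Local Open Scope ereal_scope.

Lemma expect_le p n : lem5_expect X p n <=
  1 + \sum_(k <oo) ((hh p n (2 ^+ k.+1))%:E * P (AA k)).
Proof.
rewrite /lem5_expect.
pose u : nat -> T -> \bar R := fun k t => (hh p n (2 ^+ k.+1 : R) * \1_(AA k) t)%:E.
have u0 : forall k t, 0 <= u k t.
  by move=> k t; rewrite lee_fin mulr_ge0 ?hh_ge0 ?exprn_ge0.
have mu : forall k, measurable_fun [set: T] (u k).
  move=> k; apply/measurable_EFinP; apply: measurable_funM => //.
  by apply: measurable_indic; exact: mAA.
apply: (@le_trans _ _ (\int[P]_t (1 + \sum_(k <oo) u k t))).
  apply: le_int_nm => t.
    by rewrite lee_fin hh_ge0 // ltW.
  have X0 := ltW (Xpos t).
  set N := Num.Def.archi_bound (X t).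
  have XN : (X t < 2 ^+ N)%R.
    apply: lt_le_trans (archi_boundP X0) _.
    by rewrite -natrX ler_nat ltnW // ltn_expl.
  apply: le_trans (_ : (1 + \sum_(0 <= k < N) u k t)%E <= _).
    rewrite /u sumEFin -EFinD lee_fin; apply: le_trans (ptwise_real p n N (X t) X0 XN) _.
    rewrite lerD2l big_mkord; apply: ler_sum => k _.
    by rewrite indAA.
  by rewrite leeD2l // nneseries_lim_ge // => k _ _.
rewrite ge0_integralD //; try (by apply: ge0_emeasurable_sum => // k x _ _);
  try (by move=> t _; apply: nneseries_ge0 => k _).
apply: leeD.
  by rewrite integral_cst // [X in X * _]/= mul1e; apply: probability_le1.

rewrite integral_nneseries //; try by move=> k t _.
apply: lee_nneseries => [k _ _|k _].
  by apply: integral_ge0 => t _.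
rewrite /u; under eq_integral do rewrite EFinM.
rewrite ge0_integralZl_EFin //.
- rewrite integral_indic ?mAA //. change ((hh p n (2 ^+ k.+1 : R))%:E * P (AA k `&` setT) <= (hh p n (2 ^+ k.+1 : R))%:E * P (AA k)). by rewrite setIT.
all: first [by move=> t _; rewrite lee_fin | exact: mAA | by apply/measurable_EFinP; apply: measurable_indic; exact: mAA | by rewrite hh_ge0 // exprn_ge0 | idtac].
Qed.

Lemma tailE k : P (AA k) = (tail_prob X (2 ^+ k))%:E.
Proof. by rewrite /tail_prob fineK // fin_num_measure //; exact: mAA. Qed.

Lemma tail_ge0 k : (0 <= tail_prob X (2 ^+ k))%R.
Proof. by rewrite -lee_fin -tailE. Qed.

Lemma tail_le1 k : (tail_prob X (2 ^+ k) <= 1)%R.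
Proof. by rewrite -lee_fin -tailE; apply: probability_le1; exact: mAA. Qed.

Definition Kc (p k0 : nat) : R := 1 + \sum_(0 <= k < k0) (2 ^+ k.+1) ^+ (2 * p).

Lemma expect_bound p n (a C : R) k0 : (0 < n)%N -> (p%:R < a)%R -> (a < (2 * p)%:R)%R -> (0 <= C)%R ->
  (forall k, (k0 <= k)%N -> tail_prob X (2 ^+ k) <= C * (2 ^+ k) `^ (- a))%R ->
  lem5_expect X p n <= (Kc p k0 + C * (Dc p a * n%:R `^ ((2 * p)%:R - a)))%:E.
Proof.
move=> n0 pa a2p C0 Htail.
apply: le_trans (expect_le p n) _.
rewrite /Kc -addrA EFinD leeD2l //.
have c0 : forall k, (0 <= hh p n (2 ^+ k.+1 : R))%R by move=> k; rewrite hh_ge0 // exprn_ge0.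
apply: lime_le.
  by apply: is_cvg_nneseries => k _ _; rewrite tailE -EFinM lee_fin mulr_ge0 ?tail_ge0.
exists k0 => // N /= hN.
under eq_bigr do rewrite tailE -EFinM.
rewrite sumEFin lee_fin.
rewrite (@big_cat_nat _ _ _ k0) //=.
apply: lerD.
  apply: ler_sum_nat => k _.
  apply: le_trans (_ : hh p n (2 ^+ k.+1) * 1 <= _)%R.
    by rewrite ler_wpM2l ?tail_le1.
  by rewrite mulr1 hh_le_pow // exprn_ge0.
apply: le_trans (_ : C * \sum_(k0 <= k < N) hh p n (2 ^+ k.+1 : R) * (2 ^+ k) `^ (- a) <= _)%R.
  rewrite mulr_sumr; apply: ler_sum_nat => k /andP[hk _].
  by rewrite mulrCA ler_wpM2l // Htail.
rewrite ler_wpM2l //.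
apply: le_trans _ (sumv_bound p n a N n0 pa a2p).
rewrite -(big_mkord xpredT (fun k => hh p n (2 ^+ k.+1 : R) * (2 ^+ k) `^ (- a))%R).
rewrite [X in (_ <= X)%R](@big_cat_nat _ _ _ k0) //= lerDr.
by apply: sumr_ge0 => k _; rewrite mulr_ge0 ?powR_ge0.
Qed.
End meas.
Arguments Kc {R}.
Lemma Dc_gt0 {R : realType} p (a : R) : p%:R < a -> a < (2 * p)%:R -> 0 < Dc p a.
Proof.
move=> pa a2p; rewrite /Dc.
have r1 : 1 < 2 `^ ((2 * p)%:R - a) :> R by apply: pow2_gt1; lra.
have s1 : 2 `^ (p%:R - a) < 1 :> R by apply: pow2_lt1; lra.
apply: ltr_pwDl.
  apply: divr_gt0; last lra.
  by apply: mulr_gt0; [rewrite exprn_gt0 | lra].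
by apply: divr_ge0; [rewrite exprn_ge0 | lra].
Qed.

Section fin.
Context {d} {T : measurableType d} {R : realType} {P : probability T R} {X : {RV P >-> R}}.
Hypothesis Xpos : forall t, 0 < X t.

Lemma expect_ge0 p n : (0 <= lem5_expect X p n)%E.
Proof. by apply: integral_ge0 => t _; rewrite lee_fin hh_ge0 // ltW. Qed.

Lemma expect_fin p n (B : R) : (lem5_expect X p n <= B%:E)%E ->
  (lem5_expect X p n < +oo)%E /\ `|fine (lem5_expect X p n)| <= B.
Proof.
move=> hB; have h0 := expect_ge0 p n.
have fin : lem5_expect X p n \is a fin_num by rewrite ge0_fin_numE // (le_lt_trans hB) ?ltry.
split; first by rewrite (le_lt_trans hB) ?ltry.
by rewrite ger0_norm ?fine_ge0 // -lee_fin fineK.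
Qed.

Lemma tail_dyadic (C a : R) (M : R) :
  (forall x, M < x -> 0 < x -> `|tail_prob X x| <= C * `|x `^ (- a)|) ->
  exists k0, forall k, (k0 <= k)%N -> tail_prob X (2 ^+ k) <= C * (2 ^+ k) `^ (- a).
Proof.
move=> H; exists (Num.Def.archi_bound `|M|) => k hk.
have hM : M < 2 ^+ k.
  apply: le_lt_trans (ler_norm M) _.
  apply: lt_le_trans (archi_boundP (normr_ge0 M)) _.
  rewrite -natrX ler_nat; apply: leq_trans hk _; exact/ltnW/ltn_expl.
have h2 : 0 < 2 ^+ k :> R by rewrite exprn_gt0.
apply: le_trans (ler_norm _) _; apply: le_trans (H _ hM h2) _.
by rewrite ger0_norm ?powR_ge0.
Qed.
End fin.

Theorem lemma5 (d : measure_display) (T : measurableType d) (R : realType)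
  (P : probability T R) (X : {RV P >-> R})
  (Xpos : forall t, 0 < X t) (EX1 : ('E_P[X])%E = 1%:E)
  (p : nat) (hp : (2 <= p)%N) :
  ((fun x : R => tail_prob X x) =o_ (pinfty_filter R) (fun x : R => x ^- p.+1) ->
     (forall n : nat, (0 < n)%N -> (lem5_expect X p n < +oo)%E) /\
     (fun n : nat => fine (lem5_expect X p n))
       =o_\oo (fun n : nat => n%:R ^+ p.-1 : R))
  /\
  (forall q : R, p%:R < q -> q < (2 * p)%:R ->
     (fun x : R => tail_prob X x) =O_ (pinfty_filter R) (fun x : R => powR x (- q)) ->
     (forall n : nat, (0 < n)%N -> (lem5_expect X p n < +oo)%E) /\
     (fun n : nat => fine (lem5_expect X p n))
       =O_\oo (fun n : nat => powR n%:R (2 * p%:R - q))).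
Proof.
have Kc0 : forall k0, 0 < Kc p k0 :> R.
  move=> k0; rewrite /Kc; apply: ltr_pwDl => //.
  by apply: sumr_ge0 => k _; rewrite exprn_ge0 // exprn_ge0.
split.
  move=> /eqoP Ho.
  have pa : p%:R < p.+1%:R :> R by rewrite ltr_nat.
  have a2p : p.+1%:R < (2 * p)%:R :> R by rewrite ltr_nat; lia.
  have Hb : forall eps : R, 0 < eps -> exists K, forall n, (0 < n)%N ->
      (lem5_expect X p n <= (K + eps * (Dc p p.+1%:R * n%:R `^ ((2 * p)%:R - p.+1%:R)))%:E)%E.
    move=> eps e0; have [M [_ HM]] := Ho eps e0.
    have [k0 Hk0] : exists k0, forall k, (k0 <= k)%N -> tail_prob X (2 ^+ k) <= eps * (2 ^+ k) `^ (- p.+1%:R).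
      apply: (@tail_dyadic _ _ _ _ _ eps p.+1%:R M) => x hx x0.
      by rewrite powR_invn ?(ltW x0) //; apply: HM.
    by exists (Kc p k0) => n n0; apply: expect_bound => //; exact: ltW.
  split.
    by move=> n n0; have [K HK] := Hb 1 ltr01; exact: (expect_fin Xpos _ _ _ (HK n n0)).1.
  apply/eqoP => eps e0.
  set D := Dc p (p.+1%:R : R).
  have D0 : 0 < D by apply: Dc_gt0.
  have [K HK] := Hb (eps / 2 / D) (divr_gt0 (divr_gt0 e0 (ltr0Sn _ 1)) D0).
  have ex : (2 * p)%:R - p.+1%:R = (p.-1)%:R :> R.
    by rewrite -natrB; [congr (_%:R); lia | lia].
  near=> n.
  have n0 : (0 < n)%N by near: n; exact: nbhs_infty_gt.
  have nK : 2 * `|K| / eps <= n%:R :> R by near: n; exact: nbhs_infty_ger.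
  have [_ Hn] := expect_fin Xpos _ _ _ (HK n n0).
  apply: le_trans Hn _.
  rewrite ex powR_mulrn ?ler0n // mulrA divfK ?gt_eqF //.
  have h1 : n%:R <= n%:R ^+ p.-1 :> R by apply: ler_eXnr; [lia | rewrite ler1n].
  have h2 : K <= eps / 2 * n%:R.
    apply: le_trans (ler_norm K) _.
    have -> : `|K| = eps / 2 * (2 * `|K| / eps) by field; rewrite gt_eqF.
    by rewrite ler_wpM2l // divr_ge0 // ltW.
  rewrite ger0_norm ?exprn_ge0 //.
  have : eps / 2 * n%:R <= eps / 2 * n%:R ^+ p.-1 by rewrite ler_wpM2l // divr_ge0 // ltW.
  lra.
move=> q pq q2p /eqO_exP [k k0 Hk].
have [M [_ HM]] := Hk.
have [j0 Hj0] : exists j0, forall j, (j0 <= j)%N -> tail_prob X (2 ^+ j) <= k * (2 ^+ j) `^ (- q).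
  apply: (@tail_dyadic _ _ _ _ _ k q M) => x hx x0; exact: HM.
have HB : forall n, (0 < n)%N ->
    (lem5_expect X p n <= (Kc p j0 + k * (Dc p q * n%:R `^ ((2 * p)%:R - q)))%:E)%E.
  by move=> n n0; apply: expect_bound => //; exact: ltW.
split.
  by move=> n n0; exact: (expect_fin Xpos _ _ _ (HB n n0)).1.
have D0 : 0 < Dc p q by apply: Dc_gt0.
apply/eqO_exP; exists (Kc p j0 + k * Dc p q).
  by apply: addr_gt0 => //; exact: mulr_gt0.
near=> n.
have n0 : (0 < n)%N by near: n; exact: nbhs_infty_gt.
have [_ Hn] := expect_fin Xpos _ _ _ (HB n n0).
apply: le_trans Hn _.
rewrite natrM.
have e1 : 1 <= n%:R `^ (2 * p%:R - q) :> R.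
  rewrite -[X in X <= _](powRr0 n%:R); apply: ler_powR; [by rewrite ler1n | lra].
rewrite ger0_norm ?powR_ge0 //.
set Y := n%:R `^ _.
have -> : (Kc p j0 + k * Dc p q) * Y = Kc p j0 * Y + k * (Dc p q * Y) by ring.
rewrite lerD2r.
by rewrite -{1}(mulr1 (Kc p j0)) ler_wpM2l // ltW.
Unshelve. all: by end_near.
Qed.
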